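(* Let $\mathcal{J}\in\{\mathcal{F},\mathcal{I},\mathcal{I}_1,\mathcal{C},\mathcal{C}_v\}$. If $M\in\mathcal{J}$ then $M\cup\{2\}\in\mathcal{J}$.
   Context: For a summable sequence $\mathbf{x}=(x_n)$ of positive reals (finite sequences are allowed and are identified with eventually-zero sequences), the achievement set is $\mathcal{A}(\mathbf{x})=\{\sum_{n\in A}x_n : A\subseteq\mathbb{N}\}$. The cardinal function $f_{\mathbf{x}}:\mathcal{A}(\mathbf{x})\to\{1,2,3,\dots\}\cup\{\omega,\mathfrak{c}\}$ sends $x$ to the number (cardinality) of $0$–$1$ sequences $(\varepsilon_n)$, indexed by the nonzero terms, with $\sum\varepsilon_n x_n=x$. Families of sets: $\mathcal{F}$ = ranges of cardinal functions of finite sequences; $\mathcal{I}$ = ranges of cardinal functions of sequences whose achievement set is a finite union of (nondegenerate) closed intervals; $\mathcal{I}_1$ = ranges of cardinal functions of sequences whose achievement set is a single closed interval; $\mathcal{C}$ = ranges for sequences whose achievement set is a Cantor set; $\mathcal{C}_v$ = ranges for sequences whose achievement set is a Cantorval (a nonempty compact subset of $\mathbb{R}$ equal to the closure of its interior such that both endpoints of every nontrivial connected component are accumulation points of one-point components). *)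

(* Defs.v *)
From HB Require Import structures.
From mathcomp Require Import all_boot all_order all_algebra.
From mathcomp Require Import all_classical all_reals all_analysis.
Set Implicit Arguments. Unset Strict Implicit. Unset Printing Implicit Defensive.
Import Order.TTheory GRing.Theory Num.Theory.
Import numFieldNormedType.Exports.
Local Open Scope classical_set_scope.
Local Open Scope ring_scope.

Inductive card_val : Type := CFin of nat | COmega | CContinuum.

Definition card_is (T : Type) (S : set T) (c : card_val) : Prop :=
  match c with
  | CFin n => (S #= `I_n)%card
  | COmega => (S #= [set: nat])%card
  | CContinuum => (S #= [set: nat -> bool])%card
  end.

Section Achievement.
Variable R : realType.

(* An admissible sequence: either an infinite sequence of positive reals, or a
   finite sequence (x_0,...,x_{k-1}) of positive reals identified with the
   eventually-zero sequence (x_0,...,x_{k-1},0,0,...). *)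
Definition finite_seq (x : nat -> R) : Prop :=
  exists k : nat, forall n, ((n < k)%N -> 0 < x n) /\ ((k <= n)%N -> x n = 0).

Definition admissible (x : nat -> R) : Prop :=
  (forall n, 0 < x n) \/ finite_seq x.

Definition summable (x : nat -> R) : Prop :=
  exists l : R, series x @ \oo --> l.

(* 0-1 sequences indexed by the nonzero terms of x (encoded as nat -> bool
   vanishing off the support of x) with sum_n eps_n x_n = a. *)
Definition reps (x : nat -> R) (a : R) : set (nat -> bool) :=
  [set e | (forall n, x n = 0 -> e n = false) /\
           series (fun n => (e n)%:R * x n) @ \oo --> a].

Definition achievement (x : nat -> R) : set R :=
  [set a | exists e, reps x a e].

Definition cardinal_range (x : nat -> R) : set card_val :=
  [set c | exists2 a, achievement x a & card_is (reps x a) c].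

Definition finite_union_intervals (A : set R) : Prop :=
  exists s : seq (R * R), s != [::] /\ all (fun p => p.1 < p.2) s /\
    A = [set t | has (fun p => (p.1 <= t) && (t <= p.2)) s].

Definition single_interval (A : set R) : Prop :=
  exists a b : R, a < b /\ A = `[a, b]%classic.

Definition cantor_set (A : set R) : Prop :=
  A !=set0 /\ compact A /\ perfect_set A /\ interior A = set0.

Definition one_point_components (A : set R) : set R :=
  [set t | A t /\ connected_component A t = [set t]].

Definition cantorval (A : set R) : Prop :=
  A !=set0 /\ compact A /\ A = closure (interior A) /\
  forall t c d, A t -> connected_component A t = `[c, d]%classic -> c < d ->
    limit_point (one_point_components A) c /\
    limit_point (one_point_components A) d.

End Achievement.

Inductive family : Type := FamF | FamI | FamI1 | FamC | FamCv.

Definition family_cond (R : realType) (J : family) (x : nat -> R) : Prop :=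
  match J with
  | FamF => finite_seq x
  | FamI => finite_union_intervals (achievement x)
  | FamI1 => single_interval (achievement x)
  | FamC => cantor_set (achievement x)
  | FamCv => cantorval (achievement x)
  end.

Definition in_family (R : realType) (J : family) (M : set card_val) : Prop :=
  exists x : nat -> R, [/\ admissible x, summable x, family_cond J x &
                          cardinal_range x = M].

(* Main.v *)
From HB Require Import structures.
From mathcomp Require Import all_boot all_order all_algebra.
From mathcomp Require Import all_classical all_reals all_analysis.
From mathcomp Require Import lra.
Require Import Defs.
From mathcomp Require Import classical_sets reals.
Set Implicit Arguments. Unset Strict Implicit. Unset Printing Implicit Defensive.
Import Order.TTheory GRing.Theory Num.Theory.
Import numFieldNormedType.Exports.
Local Open Scope classical_set_scope.

Section Main.
Variable R : realType.
Local Open Scope ring_scope.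


Definition pre (c : R) (x : nat -> R) : nat -> R :=
  fun n => if n is m.+1 then x m else c.
Definition bcons (b : bool) (e : nat -> bool) : nat -> bool :=
  fun n => if n is m.+1 then e m else b.

Lemma cvg_addl (v : nat -> R) (a l : R) :
  ((fun n => a + v n) @ \oo --> l) <-> (v @ \oo --> l - a).
Proof.
split=> H.
  have -> : v = (fun n => (a + v n) - a) by apply/funext => n; rewrite addrC addKr.
  by apply: cvgB => //; exact: cvg_cst.
have -> : l = a + (l - a) by rewrite addrC subrK.
by apply: cvgD => //; exact: cvg_cst.
Qed.

Lemma series_pre (u : nat -> R) l :
  (series u @ \oo --> l) <-> (series (fun n => u n.+1) @ \oo --> l - u 0%N).
Proof.
rewrite -cvg_shiftS.
have -> : [sequence series u n.+1]_n = (fun n => u 0%N + series (fun n => u n.+1) n).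
  apply/funext => n /=; rewrite /series /= big_nat_recl //.

exact: cvg_addl.
Qed.


Lemma reps_pre (c : R) x a b e : c != 0 ->
  reps (pre c x) a (bcons b e) <-> reps x (a - b%:R * c) e.
Proof.
move=> c0; rewrite /reps /=; split=> -[H1 H2]; split.
- by move=> n xn; apply: (H1 n.+1).
- by move/series_pre: H2.
- by case=> [/eqP|n xn /=]; [rewrite (negbTE c0)|apply: H1].
- by apply/series_pre.
Qed.

Lemma bcons_eta (e : nat -> bool) : e = bcons (e 0%N) (fun n => e n.+1).
Proof. by apply/funext; case. Qed.

Lemma bcons_inj b : injective (bcons b).
Proof. by move=> e1 e2 H; apply/funext => n; have := congr1 (fun f => f n.+1) H. Qed.

Lemma reps_preE (c : R) x a : c != 0 ->
  reps (pre c x) a = bcons false @` reps x a `|` bcons true @` reps x (a - c).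
Proof.
move=> c0; apply/seteqP; split=> [e|e [[e' H <-]|[e' H <-]]].
- rewrite [e]bcons_eta; case: (e 0%N) => /reps_pre => /(_ c0) H.
    by right; exists (fun n => e n.+1) => //; rewrite mul1r in H.
  by left; exists (fun n => e n.+1) => //; rewrite mul0r subr0 in H.
- by apply/reps_pre => //; rewrite mul0r subr0.
- by apply/reps_pre => //; rewrite mul1r.
Qed.

Lemma ach_pre (c : R) x a : c != 0 ->
  achievement (pre c x) a <-> achievement x a \/ achievement x (a - c).
Proof.
move=> c0; rewrite /achievement /= reps_preE //; split.
  by case=> e [[e' H _]|[e' H _]]; [left|right]; exists e'.
by case=> -[e' H]; [exists (bcons false e'); left|exists (bcons true e'); right];
  exists e'.
Qed.

Lemma series_ge0_eq0 (u : nat -> R) : (forall n, 0 <= u n) ->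
  series u @ \oo --> 0 -> forall n, u n = 0.
Proof.
move=> u0 H n; apply/eqP; rewrite eq_le u0 andbT; apply: (cvgr_to_ge H).
near=> m.
have -> : u n = series u n.+1 - series u n by rewrite seriesSB.
have h1 : series u n.+1 <= series u m.
  apply: (nondecreasing_series (P := predT) (m := 0%N)) => //.
  by near: m; exists n.+1.
have h2 : 0 <= series u n by rewrite /series /=; apply: sumr_ge0.
by apply: le_trans h1; rewrite lerBlDr lerDl.
Unshelve. all: by end_near. Qed.

Lemma reps_bounds (x : nat -> R) (S a : R) e : (forall n, 0 <= x n) -> series x @ \oo --> S ->
  reps x a e -> 0 <= a <= S.
Proof.
move=> x0 HS [_ Ha]; apply/andP; split.
  apply: (cvgr_to_ge Ha); near=> n; rewrite /series /=; apply: sumr_ge0 => k _.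
  by apply: mulr_ge0.
apply: (ler_cvg_to Ha HS); near=> n; rewrite /series /=; apply: ler_sum => k _.
by case: (e k); rewrite ?mul1r ?mul0r.
Unshelve. all: by end_near. Qed.

Lemma reps_0 (x : nat -> R) e : (forall n, 0 <= x n) -> reps x 0 e -> e = fun _ => false.
Proof.
move=> x0 [H1 H2]; apply/funext => n.
have := series_ge0_eq0 (fun k => mulr_ge0 (ler0n _ (e k)) (x0 k)) H2 n.
case: (e n) (H1 n) => //=; rewrite mul1r => h h'; exact: h.
Qed.

Lemma reps_S (x : nat -> R) (S : R) e : (forall n, 0 <= x n) -> series x @ \oo --> S ->
  reps x S e -> e = fun n => x n != 0.
Proof.
move=> x0 HS [H1 H2]; apply/funext => n.
set u := fun k => x k - (e k)%:R * x k.
have u0 k : 0 <= u k by rewrite /u subr_ge0; case: (e k); rewrite ?mul1r ?mul0r.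
have Hu : series u @ \oo --> 0.
  have -> : series u = (fun k => series x k - series (fun k => (e k)%:R * x k) k).
    by apply/funext => k; rewrite /series /= sumrB.
  by rewrite -(subrr S); apply: cvgB.
have := series_ge0_eq0 u0 Hu n; rewrite /u.
case: (e n) (H1 n) => /=; rewrite ?mul1r ?mul0r ?subr0.
  by move=> h _; case: eqP => // /h.
by move=> _ ->; rewrite eqxx.
Qed.


Lemma card_is_eq T U (A : set T) (B : set U) c : (A #= B)%card -> card_is B c -> card_is A c.
Proof. by case: c => [n||] /= h1 h2; apply: card_eq_trans h1 h2. Qed.

Lemma card_set2 T (e1 e2 : T) : e1 <> e2 -> ([set e1; e2] #= `I_2)%card.
Proof.
move=> ne; set f := fun n : nat => if n == 0%N then e1 else e2.
have -> : [set e1; e2] = f @` `I_2.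
  apply/seteqP; split=> [z [->|->]|z [n /= n2 <-]].
  - by exists 0%N.
  - by exists 1%N.
  by rewrite /f; case: ifP => _; [left|right].
apply: inj_card_eq => n m; rewrite !in_setE /= /f.
case: n => [|[|//]]; case: m => [|[|//]] //= _ _ h; by [have := ne h| have := ne (esym h)].
Qed.

Lemma card_is2 T (e1 e2 : T) c : e1 <> e2 -> card_is [set e1; e2] c -> c = CFin 2.
Proof.
move=> ne; have h2 := card_set2 ne.
case: c => [n||] /= H.
- have : (`I_2 #= `I_n)%card by apply: card_eq_trans (card_esym h2) H.
  by move/card_eq_II => ->.
- exfalso; apply: infinite_nat; rewrite -(eq_finite_set H) (eq_finite_set h2).
  exact: finite_II.
- exfalso; apply: infinite_nat.
  have : finite_set [set: nat -> bool].
    by rewrite -(eq_finite_set H) (eq_finite_set h2); exact: finite_II.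
  move=> /(sub_finite_set (B := [set: nat -> bool]) (A := (fun n : nat => fun m : nat => n == m) @` [set: nat])).
  rewrite (eq_finite_set (inj_card_eq _)); first by apply; move=> ?.
  move=> n m _ _ h; have := congr1 (fun f => f m) h; rewrite eqxx /=.
  by move/eqP.
Qed.


Lemma reps_empty (x : nat -> R) a : ~ achievement x a -> reps x a = set0.
Proof. by move=> h; apply/seteqP; split=> // e he; apply: h; exists e. Qed.

Lemma reps_y_left (c : R) x a : c != 0 -> ~ achievement x (a - c) ->
  (reps (pre c x) a #= reps x a)%card.
Proof.
move=> c0 h; rewrite reps_preE // (reps_empty h) image_set0 setU0.
by apply: inj_card_eq => e1 e2 _ _; apply: bcons_inj.
Qed.

Lemma reps_y_right (c : R) x a : c != 0 -> ~ achievement x a ->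
  (reps (pre c x) a #= reps x (a - c))%card.
Proof.
move=> c0 h; rewrite reps_preE // (reps_empty h) image_set0 set0U.
by apply: inj_card_eq => e1 e2 _ _; apply: bcons_inj.
Qed.

Lemma disj_range (c : R) x : c != 0 ->
  (forall a, achievement x a -> achievement x (a - c) -> False) ->
  cardinal_range (pre c x) = cardinal_range x.
Proof.
move=> c0 hd; apply/seteqP; split=> k [a ha hk].
  case/(ach_pre _ _ c0): ha => ha.
    exists a => //; apply: card_is_eq hk; apply: card_esym.
    by apply: reps_y_left => // /(hd _ ha).
  exists (a - c) => //; apply: card_is_eq hk; apply: card_esym.
  by apply: reps_y_right => // /hd /(_ ha).
exists a; first by apply/ach_pre => //; left.
by apply: card_is_eq hk; apply: reps_y_left => // /(hd _ ha).
Qed.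

Lemma main_range (x : nat -> R) S : (forall n, 0 <= x n) -> series x @ \oo --> S ->
  0 < S -> cardinal_range (pre S x) = cardinal_range x `|` [set CFin 2].
Proof.
move=> x0 HS S0; have S0' : S != 0 by rewrite gt_eqF.
have bnd a : achievement x a -> 0 <= a <= S.
  by case=> e /(reps_bounds x0 HS).
have both a : achievement x a -> achievement x (a - S) -> a = S.
  move=> /bnd/andP[_ h1] /bnd/andP[h2 _]; apply/eqP; rewrite eq_le h1.
  by rewrite subr_ge0 in h2.
set eS := fun n => x n != 0.
have repsS : reps x S = [set eS].
  apply/seteqP; split=> [e /(reps_S x0 HS) -> //|e ->]; split.
    by move=> n; rewrite /eS => ->; rewrite eqxx.
  have -> : (fun n => (eS n)%:R * x n) = x; last exact: HS.
  by apply/funext => n; rewrite /eS; case: eqP => [->|]; rewrite ?mulr0 ?mul1r.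
have reps0 : reps x 0 = [set (fun _ => false)].
  apply/seteqP; split=> [e /(reps_0 x0) -> //|e ->]; split => //.
  have -> : (fun n => ((fun _ : nat => false) n)%:R * x n) = fun _ => 0.
    by apply/funext => n; rewrite mul0r.
  have -> : series (fun _ : nat => (0 : R)) = fun _ => 0.
    by apply/funext => n; rewrite /series /= big1.
  exact: cvg_cst.
have achS : achievement x S by exists eS; rewrite repsS.
have ach0 : achievement x 0 by exists (fun _ => false); rewrite reps0.
have repsyS : reps (pre S x) S = [set bcons false eS; bcons true (fun _ => false)].
  by rewrite reps_preE // subrr repsS reps0 !image_set1.
apply/seteqP; split=> k.
- case=> a ha hk; have [eaS|aS] := eqVneq a S.
    rewrite eaS in hk.
    right; apply: (card_is2 _ (e1 := bcons false eS) (e2 := bcons true (fun _ => false))).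
      by move=> h; have := congr1 (fun f => f 0%N) h.
    by rewrite -repsyS.
  left; case/(ach_pre _ _ S0'): ha => ha.
    exists a => //; apply: card_is_eq hk; apply: card_esym.
    by apply: reps_y_left => // /(both _ ha) /eqP; rewrite (negbTE aS).
  exists (a - S) => //; apply: card_is_eq hk; apply: card_esym.
  by apply: reps_y_right => // /both /(_ ha) /eqP; rewrite (negbTE aS).
case=> [[a ha hk]|hk].
- have [eaS|aS] := eqVneq a S.
    rewrite eaS in hk; exists 0; first by apply/ach_pre => //; left.
    apply: card_is_eq hk; apply: card_eq_trans (reps_y_left _ _) _ => //.
      by move=> /bnd; rewrite sub0r oppr_ge0 leNgt S0.
    by rewrite repsS reps0; apply: eq_card1.
  exists a; first by apply/ach_pre => //; left.
  by apply: card_is_eq hk; apply: reps_y_left => // /(both _ ha) /eqP; rewrite (negbTE aS).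
- rewrite hk; exists S; first by apply/ach_pre => //; left.
  by rewrite repsyS; apply: card_set2 => h; have := congr1 (fun f => f 0%N) h.
Qed.



Definition sh (S : R) (E : set R) : set R := [set z | E (z - S)].

Lemma shE (S z : R) : S + (z - S) = z.
Proof. by rewrite addrC subrK. Qed.

Lemma shE' (S z : R) : S + z - S = z.
Proof. by rewrite addrC addKr. Qed.

Lemma nbhs_sh (S w : R) (P : set R) : nbhs (S + w) P <-> nbhs w (fun z => P (S + z)).
Proof. exact: (@nbhsDr _ R^o P S w). Qed.

Lemma interior_sh S (E : set R) w : (sh S E)° (S + w) <-> E° w.
Proof.
rewrite /interior /= nbhs_sh.
suff -> : (fun z => sh S E (S + z)) = E by [].
by apply/funext => z; rewrite /sh /= shE'.
Qed.

Lemma closure_sh S (E : set R) w : closure E w -> closure (sh S E) (S + w).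
Proof.
move=> h B /nbhs_sh /h [z [Ez Bz]]; exists (S + z); split => //.
by rewrite /sh /= shE'.
Qed.

Lemma limit_sh S (E : set R) w : limit_point E w -> limit_point (sh S E) (S + w).
Proof.
move=> h B /nbhs_sh /h [z [zw Ez Bz]]; exists (S + z); split => //.
  by apply: contra zw => /eqP/addrI ->.
by rewrite /sh /= shE'.
Qed.

Lemma interval_sh S (E : set R) : is_interval E -> is_interval (sh S E).
Proof.
move=> h x y Ex Ey z /andP[xz zy]; apply: (h _ _ Ex Ey).
by rewrite !lerD2r xz zy.
Qed.

Lemma sh_image S (E : set R) : sh S E = (fun a => S + a) @` E.
Proof.
apply/seteqP; split=> z.
  by move=> Ez; exists (z - S) => //; rewrite shE.
by case=> a Ea <-; rewrite /sh /= shE'.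
Qed.

Lemma compact_sh S (E : set R) : compact E -> compact (sh S E).
Proof.
move=> cE; rewrite sh_image; apply: continuous_compact => //.
apply: continuous_subspaceT => z; apply: cvgD; [exact: cvg_cst|exact: cvg_id].
Qed.

Lemma compactU_sh S (E : set R) : compact E -> compact (E `|` sh S E).
Proof. by move=> cE; apply: compactU => //; exact: compact_sh. Qed.

Lemma fin_U S (A : set R) : finite_union_intervals A -> finite_union_intervals (A `|` sh S A).
Proof.
case=> s [s0 [sa ->]].
exists (s ++ map (fun p => (S + p.1, S + p.2)) s); split.
  by move: s0; case: (s).
split.
  by rewrite all_cat sa /= all_map; apply/allP => p ps /=; rewrite ltrD2l (allP sa).
apply/funext => t; apply/propext; rewrite /sh /= has_cat has_map.
have -> : has (preim (fun p : R * R => (S + p.1, S + p.2))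
          (fun p : R * R => (p.1 <= t) && (t <= p.2))) s =
          has (fun p : R * R => (p.1 <= t - S) && (t - S <= p.2)) s.
  by apply: eq_has => p /=; rewrite lerBrDl lerBlDl.
by split=> /orP.
Qed.

Lemma int_U S (A : set R) : (forall a, A a -> 0 <= a <= S) -> A 0 -> A S ->
  single_interval A -> single_interval (A `|` sh S A).
Proof.
move=> bnd A0 AS [a [b [ab hA]]].
have Aa : A a by rewrite hA /= in_itv /= lexx (ltW ab).
have Ab : A b by rewrite hA /= in_itv /= lexx (ltW ab).
have a0 : a = 0.
  move: A0; rewrite hA /= in_itv /= => /andP[h1 _].
  by move: (bnd _ Aa) => /andP[h2 _]; apply/eqP; rewrite eq_le h1 h2.
have bS : b = S.
  move: AS; rewrite hA /= in_itv /= => /andP[_ h1].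
  by move: (bnd _ Ab) => /andP[_ h2]; apply/eqP; rewrite eq_le h1 h2.
subst a b; exists 0, (S + S); split; first lra.
rewrite hA; apply/funext => t; apply/propext; rewrite /sh /= !in_itv /=.
split.
  case=> /andP[h1 h2]; apply/andP; split; lra.
move=> /andP[h1 h2]; have [tS|tS] := leP t S.
  by left; apply/andP.
by right; apply/andP; split; lra.
Qed.


Lemma lp_mono (E F : set R) : E `<=` F -> limit_point E `<=` limit_point F.
Proof. by move=> EF z h B /h [y [yz Ey By]]; exists y; split => //; apply: EF. Qed.

Lemma closedU_sh S (A : set R) : compact A -> closed (A `|` sh S A).
Proof. by move=> cA; apply: compact_closed => //; exact: compactU_sh. Qed.

Lemma perfect_U S (A : set R) : compact A -> perfect_set A -> perfect_set (A `|` sh S A).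
Proof.
move=> cA [clA lA]; split; first exact: closedU_sh.
apply/seteqP; split=> z.
  by move/subset_limit_point; rewrite -(closure_id _).1 //; exact: closedU_sh.
case=> h.
  by apply: (lp_mono (@subsetUl _ _ _)); rewrite lA.
apply: (lp_mono (@subsetUr _ _ _)); rewrite -(shE S z); apply: limit_sh.
by rewrite lA.
Qed.

Lemma interior_U S (A : set R) : compact A -> interior A = set0 ->
  interior (A `|` sh S A) = set0.
Proof.
move=> cA iA; apply/seteqP; split => // p Up; set V := (A `|` sh S A)°.
have oV : open V := @open_interior _ _.
have [sub|] := pselect (V `<=` A).
  have : A° p.
    by apply: filterS sub _; apply: open_nbhs_nbhs; split.
  by rewrite iA.
move=> /existsNP [q] /not_implyP [Vq nAq].
have hN : nbhs q (V `&` ~` A).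
  apply: open_nbhs_nbhs; split; last by split.
  by apply: openI => //; apply: closed_openC; exact: compact_closed.
have : (sh S A)° q.
  apply: filterS hN => z [/interior_subset [Az|//] nAz].
  by exfalso; apply: nAz.
by rewrite -[q](shE S) interior_sh iA.
Qed.


Lemma lp_minus (E : set R) z w : limit_point E w -> limit_point (E `\ z) w.
Proof.
move=> h B hB; have [<-|wz] := eqVneq w z.
  have [y [yw Ey By]] := h B hB; exists y; split => //; split => //.
  by move=> /= yw'; move: yw; rewrite yw' eqxx.
have hB' : nbhs w (B `&` [set x | x != z]).
  apply: (filterI hB); apply: open_nbhs_nbhs; split; [exact: open_neq|exact: wz].
have [y [yw Ey [By yz]]] := h _ hB'; exists y; split => //; split => //.
by move: yz => /eqP.
Qed.

Section CV.
Variables (S : R) (A : set R).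
Hypothesis bnd : forall a, A a -> 0 <= a <= S.
Hypothesis A0 : A 0.
Hypothesis AS : A S.
Let U := A `|` sh S A.
Let cc := @connected_component R.

Lemma UA z : U z -> z <= S -> A z.
Proof.
case=> // h zS; have /andP[h1 _] := bnd h; have -> : z = S by lra.
exact: AS.
Qed.

Lemma UB z : U z -> S <= z -> A (z - S).
Proof.
case=> // h zS; have /andP[_ h1] := bnd h; have -> : z - S = 0 by lra.
exact: A0.
Qed.

Lemma itv_cc (E : set R) p : is_interval (cc E p).
Proof. by apply/connected_intervalP; exact: component_connected. Qed.

Lemma CA p : A p -> cc A p `<=` cc U p.
Proof.
move=> Ap; apply: connected_component_max.
- exact: connected_component_refl.
- by move=> z /connected_component_sub; left.
- exact: component_connected.
Qed.

Lemma CB w : A w -> sh S (cc A w) `<=` cc U (S + w).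
Proof.
move=> Aw; apply: connected_component_max.
- by rewrite /sh /= shE'; exact: connected_component_refl.
- by move=> z /connected_component_sub; right.
- by apply/connected_intervalP; apply: interval_sh; exact: itv_cc.
Qed.

Lemma KA (K : set R) p : is_interval K -> K `<=` U -> K p -> p <= S ->
  [set z | K z /\ z <= S] `<=` cc A p.
Proof.
move=> iK KU Kp pS; apply: connected_component_max => //.
- by move=> z [Kz zS]; apply: UA => //; exact: KU.
- apply/connected_intervalP => x y [Kx xS] [Ky yS] z /andP[xz zy].
  by split; [apply: (iK x y) => //; rewrite xz zy | lra].
Qed.

Lemma KB (K : set R) p : is_interval K -> K `<=` U -> K p -> S <= p ->
  [set z | K z /\ S <= z] `<=` sh S (cc A (p - S)).
Proof.
move=> iK KU Kp pS z [Kz zS]; rewrite /sh /=.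
suff : [set w | K (S + w) /\ 0 <= w] `<=` cc A (p - S).
  by apply; split; [rewrite shE | lra].
apply: connected_component_max => //.
- by split; [rewrite shE | lra].
- move=> w [Kw w0]; have := UB (KU _ Kw); rewrite shE'; apply; lra.
- apply/connected_intervalP => x y [Kx x0] [Ky y0] w /andP[xw wy].
  split; last lra.
  by apply: (iK (S + x) (S + y)) => //; rewrite !lerD2l xw wy.
Qed.

Lemma O1 p : one_point_components A p -> p != S -> one_point_components U p.
Proof.
case=> Ap cAp pS; split; first by left.
have hp : p <= S by case/andP: (bnd Ap).
have Up : U p by left.
have iK := @itv_cc U p.
have KU : cc U p `<=` U by move=> ?; apply: connected_component_sub.
have Kp : cc U p p by apply: connected_component_refl.
apply/seteqP; split=> [q hq|q ->] //.
have [qS|qS] := leP q S.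
  by have := KA iK KU Kp hp (conj hq qS); rewrite /cc cAp.
have KS : cc U p S by apply: (iK p q) => //; rewrite hp ltW.
have := KA iK KU Kp hp (conj KS (lexx S)); rewrite /cc cAp => /= Sp.
by move: pS; rewrite Sp eqxx.
Qed.

Lemma O2 p : one_point_components A p -> p != 0 -> one_point_components U (S + p).
Proof.
case=> Ap cAp p0; have Up : U (S + p) by right; rewrite /sh /= shE'.
split => //.
have hp : 0 <= p by case/andP: (bnd Ap).
have hSp : S <= S + p by lra.
have iK := @itv_cc U (S + p).
have KU : cc U (S + p) `<=` U by move=> ?; apply: connected_component_sub.
have Kp : cc U (S + p) (S + p) by apply: connected_component_refl.
apply/seteqP; split=> [q hq|q ->] //.
have [Sq|Sq] := leP S q.
  have := KB iK KU Kp hSp (conj hq Sq); rewrite /sh /= shE' /cc cAp /= => <-.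
  by rewrite shE.
have KS : cc U (S + p) S by apply: (iK q (S + p)) => //; rewrite hSp ltW.
have := KB iK KU Kp hSp (conj KS (lexx S)); rewrite /sh /= shE' /cc cAp /= subrr.
by move=> e; move: p0; rewrite -e eqxx.
Qed.

Lemma lift1 w : limit_point (one_point_components A) w ->
  limit_point (one_point_components U) w.
Proof.
move=> /(lp_minus S); apply: lp_mono => z [hz zS]; apply: O1 => //.
by apply/eqP.
Qed.

Lemma lift2 w : limit_point (sh S (one_point_components A)) w ->
  limit_point (one_point_components U) w.
Proof.
move=> /(lp_minus S); apply: lp_mono => z [hz zS].
rewrite -(shE S z); apply: O2 => //; apply/eqP => h; apply: zS => /=.
by rewrite -(shE S z) h addr0.
Qed.

Hypothesis HA : forall t c d, A t -> connected_component A t = `[c, d]%classic ->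
  c < d -> limit_point (one_point_components A) c /\
           limit_point (one_point_components A) d.

Lemma ends t c d : U t -> cc U t = `[c, d]%classic -> c < d ->
  limit_point (one_point_components U) c /\ limit_point (one_point_components U) d.
Proof.
move=> Ut hK cd.
have Kc : cc U t c by rewrite hK /= in_itv /= lexx ltW.
have Kd : cc U t d by rewrite hK /= in_itv /= lexx ltW.
have KU : cc U t `<=` U by move=> ?; apply: connected_component_sub.
have iK := @itv_cc U t.
have eKc : cc U c = `[c, d]%classic by rewrite /cc -(same_connected_component Kc).
have eKd : cc U d = `[c, d]%classic by rewrite /cc -(same_connected_component Kd).
split.
- have [cS|cS] := ltP c S.
    have Ac : A c := UA (KU _ Kc) (ltW cS).
    have e : connected_component A c = `[c, Num.min d S]%classic.
      apply/seteqP; split=> z.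
        move=> hz; have := CA Ac hz; rewrite eKc /= !in_itv /= => /andP[h1 h2].
        have /andP[_ h3] := bnd (connected_component_sub hz).
        by rewrite le_min h1 h2 h3.
      rewrite /= in_itv /= le_min => /and3P[h1 h2 h3].
      apply: (KA iK KU Kc (ltW cS)); split => //.
      by rewrite hK /= in_itv /= h1 h2.
    have : c < Num.min d S by rewrite lt_min cd cS.
    by move=> /(HA Ac e) [+ _]; exact: lift1.
  have Ac : A (c - S) := UB (KU _ Kc) cS.
  have e : connected_component A (c - S) = `[c - S, d - S]%classic.
    apply/seteqP; split=> z.
      move=> hz; have : sh S (cc A (c - S)) (S + z) by rewrite /sh /= shE'.
      move=> /(CB Ac); rewrite shE eKc /= !in_itv /= => /andP[h1 h2].
      by apply/andP; split; lra.
    rewrite /= in_itv /= => /andP[h1 h2].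
    have : cc U t (S + z) /\ S <= S + z.
      by rewrite hK /= in_itv /=; split; [apply/andP; split|]; lra.
    by move=> /(KB iK KU Kc cS); rewrite /sh /= shE'.
  have : c - S < d - S by lra.
  move=> /(HA Ac e) [+ _] => /(limit_sh (S := S)); rewrite shE.
  by apply: lift2; rewrite /sh /=.
- have [dS|dS] := leP d S.
    have Ad : A d := UA (KU _ Kd) dS.
    have e : connected_component A d = `[c, d]%classic.
      apply/seteqP; split=> z.
        by move=> hz; have := CA Ad hz; rewrite eKd.
      move=> hz; apply: (KA iK KU Kd dS); rewrite hK; split => //.
      by move: hz; rewrite /= in_itv /= => /andP[_ h]; lra.
    by case: (HA Ad e cd) => _; exact: lift1.
  have Ad : A (d - S) := UB (KU _ Kd) (ltW dS).
  have e : connected_component A (d - S) = `[Num.max c S - S, d - S]%classic.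
    apply/seteqP; split=> z.
      move=> hz; have : sh S (cc A (d - S)) (S + z) by rewrite /sh /= shE'.
      have /andP[z0 _] := bnd (connected_component_sub hz).
      move=> /(CB Ad); rewrite shE eKd /= !in_itv /= => /andP[h1 h2].
      rewrite lerBlDl ge_max h1 /=; apply/andP; split; lra.
    rewrite /= in_itv /= lerBlDl ge_max => /andP[/andP[h1 h2] h3].
    have : cc U t (S + z) /\ S <= S + z.
      by rewrite hK /= in_itv /=; split; [apply/andP; split|]; lra.
    by move=> /(KB iK KU Kd (ltW dS)); rewrite /sh /= shE'.
  have : Num.max c S - S < d - S by rewrite ltrBlDr subrK gt_max cd dS.
  move=> /(HA Ad e) [_] => /(limit_sh (S := S)); rewrite shE.
  by apply: lift2; rewrite /sh /=.
Qed.

End CV.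


Lemma ci_U S (A : set R) : compact A -> A = closure A° ->
  (A `|` sh S A) = closure (A `|` sh S A)°.
Proof.
move=> cA ci; apply/seteqP; split=> z.
  case=> hz.
    by move: hz; rewrite {1}ci; apply: closureS; apply: interiorS; exact: subsetUl.
  move: hz; rewrite /sh /= {1}ci => /(closure_sh (S := S)); rewrite shE.
  apply: closureS => w /= h.
  have : (sh S A)° (S + (w - S)) by apply/interior_sh.
  by rewrite shE; apply: interiorS; exact: subsetUr.
move=> h; have := closedU_sh (S := S) cA; rewrite closure_id => ->.
by move: h; apply: closureS; exact: interior_subset.
Qed.

Lemma cantorval_U S (A : set R) : (forall a, A a -> 0 <= a <= S) -> A 0 -> A S ->
  cantorval A -> cantorval (A `|` sh S A).
Proof.
move=> bnd A0 AS [[a Aa] [cA [ci HA]]]; split; first by exists a; left.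
split; first exact: compactU_sh.
split; first exact: ci_U.
by move=> t c d Ut hK cd; apply: (ends bnd A0 AS HA Ut hK cd).
Qed.

Lemma cantor_U S (A : set R) : cantor_set A -> cantor_set (A `|` sh S A).
Proof.
move=> [[a Aa] [cA [pA iA]]]; split; first by exists a; left.
split; first exact: compactU_sh.
split; first exact: perfect_U.
exact: interior_U.
Qed.

Lemma nbhs_other (p : R) (P : set R) : nbhs p P -> exists2 q, q != p & P q.
Proof.
move=> /nbhs_ballP [e /= e0 he]; exists (p + e / 2).
  by apply/eqP => h; lra.
by apply: he; rewrite ball_itv /= in_itv /=; apply/andP; split; lra.
Qed.


Lemma x_nonneg (x : nat -> R) : admissible x -> forall n, 0 <= x n.
Proof.
case=> [h n|[k h] n]; first exact: ltW.
have [nk|nk] := ltnP n k; first by apply: ltW; apply: (proj1 (h n)).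
by rewrite (proj2 (h n) nk).
Qed.

Lemma fs_pre (c : R) x : 0 < c -> finite_seq x -> finite_seq (pre c x).
Proof.
move=> c0 [k h]; exists k.+1; case=> [|n] /=; first by split.
by rewrite !ltnS; exact: h.
Qed.

Lemma adm_pre (c : R) x : 0 < c -> admissible x -> admissible (pre c x).
Proof.
move=> c0 [h|h]; last by right; exact: fs_pre.
by left; case.
Qed.

Lemma sum_pre (c : R) x S : series x @ \oo --> S -> series (pre c x) @ \oo --> c + S.
Proof. by move=> HS; apply/series_pre; rewrite /pre /= addrAC subrr add0r. Qed.

Lemma ach_eq (c : R) x : c != 0 ->
  achievement (pre c x) = achievement x `|` sh c (achievement x).
Proof. by move=> c0; apply/funext => a; apply/propext; rewrite ach_pre. Qed.

Lemma ach_0 (x : nat -> R) : achievement x 0.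
Proof.
exists (fun _ => false); split => //.
have -> : (fun n => ((fun _ : nat => false) n)%:R * x n) = fun _ => 0.
  by apply/funext => n; rewrite mul0r.
have -> : series (fun _ : nat => (0 : R)) = fun _ => 0.
  by apply/funext => n; rewrite /series /= big1.
exact: cvg_cst.
Qed.

Lemma ach_S (x : nat -> R) S : series x @ \oo --> S -> achievement x S.
Proof.
move=> HS; exists (fun n => x n != 0); split.
  by move=> n ->; rewrite eqxx.
have -> : (fun n => ((fun n => x n != 0) n)%:R * x n) = x; last exact: HS.
by apply/funext => n /=; case: eqP => [->|]; rewrite ?mulr0 ?mul1r.
Qed.

Lemma main_aux (J : family) (M : set card_val) :
  in_family R J M -> in_family R J (M `|` [set CFin 2]).
Proof.
case=> x [adm [S HS] fam <-].
have x0 := x_nonneg adm.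
have bnd a : achievement x a -> 0 <= a <= S by case=> e /(reps_bounds x0 HS).
have A0 := ach_0 x.
have AS := ach_S HS.
have S0 : 0 <= S by case/andP: (bnd _ A0).
have [Spos|Sle] := ltP 0 S.
  exists (pre S x); split.
  - exact: adm_pre.
  - by exists (S + S); exact: sum_pre.
  - case: J fam => /= fam; first exact: fs_pre.
    + by rewrite ach_eq ?gt_eqF //; exact: fin_U.
    + by rewrite ach_eq ?gt_eqF //; exact: int_U.
    + by rewrite ach_eq ?gt_eqF //; exact: cantor_U.
    + by rewrite ach_eq ?gt_eqF //; exact: cantorval_U.
  - exact: main_range.
have eS : S = 0 by apply/eqP; rewrite eq_le Sle S0.
subst S.
have xz n : x n = 0 by apply: (series_ge0_eq0 x0 HS).
have A_0 a : achievement x a -> a = 0.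
  by move=> /bnd /andP[h1 h2]; apply/eqP; rewrite eq_le h1 h2.
case: J fam => /= fam.
- have fz : finite_seq (pre (1 + 0) (pre 1 x)).
    exists 2%N; case=> [|[|n]] /=; split => //; rewrite ?xz //; lra.
  exists (pre (1 + 0) (pre 1 x)); split => //.
  + by right.
  + by exists ((1 + 0) + (1 + 0)); apply: sum_pre; apply: sum_pre.
  + rewrite main_range //.
    * congr (_ `|` _); apply: disj_range; first exact: oner_neq0.
      by move=> a /A_0 -> /A_0; rewrite sub0r => /eqP; rewrite oppr_eq0 oner_eq0.
    * by case=> [|n] /=; [lra|exact: x0].
    * exact: sum_pre.
- exfalso; case: fam => s [s0 [sa hA]].
  move: s0 sa hA; case: s => [//|p s'] _ /andP[p12 _] hA.
  have A1 : achievement x p.1 by rewrite hA /= lexx (ltW p12).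
  have A2 : achievement x p.2 by rewrite hA /= lexx (ltW p12).
  by move: p12; rewrite (A_0 _ A1) (A_0 _ A2) ltxx.
- exfalso; case: fam => a [b [ab hA]].
  have Aa : achievement x a by rewrite hA /= in_itv /= lexx (ltW ab).
  have Ab : achievement x b by rewrite hA /= in_itv /= lexx (ltW ab).
  by move: ab; rewrite (A_0 _ Aa) (A_0 _ Ab) ltxx.
- exfalso; case: fam => [[a Aa] [_ [[_ lA] _]]].
  have : limit_point (achievement x) a by rewrite lA.
  move=> /(_ setT filterT) [y [ya Ay _]].
  by move: ya; rewrite (A_0 _ Ay) (A_0 _ Aa) eqxx.
- exfalso; case: fam => [[a Aa] [_ [ci _]]].
  have : closure (achievement x)° a by rewrite -ci.
  move=> /(_ setT filterT) [p [ip _]].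
  have Ap : achievement x p := nbhs_singleton ip.
  have [q qp Aq] := nbhs_other ip.
  by move: qp; rewrite (A_0 _ Aq) (A_0 _ Ap) eqxx.
Qed.

End Main.

Theorem lemma2p3 (R : realType) (J : family) (M : set card_val) :
  in_family R J M -> in_family R J (M `|` [set CFin 2]).
Proof. exact: main_aux. Qed.
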